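(* Let $\mathcal G$ be an undirected graph on nodes $\{1,\dots,n\}$ with adjacency matrix $A=(a_{ij})\in\{0,1\}^{n\times n}$, and consider the networked SIR process on $\mathcal G$ with infection rates $\beta_i>0$ and recovery rates $\delta_i>0$, $i=1,\dots,n$. Define the $n\times n$ diagonal matrices $J$, $B$, $D$ by $J_{ii}=S_i(0)$, $B_{ii}=\beta_i$, $D_{ii}=\delta_i$. Let $\bar\lambda>0$ be given. If there exists an entrywise positive vector $v\in\mathbb R^n$ such that $$v^\top JBA+\mathbf 1_n^\top D< v^\top D \quad\text{(entrywise)}\qquad\text{and}\qquad v^\top I(0)<\bar\lambda+\sigma_I(0),$$ then $\lambda<\bar\lambda$.
   Context: Networked SIR process: each node $i$ is at each time $t\ge0$ in exactly one of the states susceptible, infected, removed, encoded by $\{0,1\}$-valued variables $S_i(t),I_i(t),R_i(t)$ (exactly one equals $1$). It is a continuous-time Markov process with transition probabilities, for all $t\ge 0$, $h>0$: $\Pr(I_i(t+h)=1\mid S_i(t)=1)=\beta_i\sum_{j=1}^n a_{ij}I_j(t)\,h+o(h)$ and $\Pr(R_i(t+h)=1\mid I_i(t)=1)=\delta_i h+o(h)$; no other transitions occur (removed nodes stay removed). At time $0$ each node is (deterministically, known) either susceptible or infected. $I(t)=[I_1(t),\dots,I_n(t)]^\top$. $\sigma_I(t)$ and $\sigma_R(t)$ denote the numbers of infected and removed nodes at time $t$, and $\lambda=\lim_{t\to\infty}E[\sigma_R(t)]-\sigma_I(0)$ (the expected number of infections after time $0$). $\mathbf 1_n$ is the all-ones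 vector in $\mathbb R^n$; inequalities between vectors are entrywise. *)

(* Defs.v *)
From HB Require Import structures.
From mathcomp Require Import all_boot all_order all_algebra.
From mathcomp Require Import all_classical all_reals all_analysis.
Set Implicit Arguments. Unset Strict Implicit. Unset Printing Implicit Defensive.
Import Order.TTheory GRing.Theory Num.Theory.
Import numFieldNormedType.Exports.
Local Open Scope classical_set_scope.
Local Open Scope ring_scope.

Definition stS : 'I_3 := @Ordinal 3 0 isT.
Definition stI : 'I_3 := @Ordinal 3 1 isT.
Definition stR : 'I_3 := @Ordinal 3 2 isT.

Definition config (n : nat) := {ffun 'I_n -> 'I_3}.

Definition upd n (x : config n) (i : 'I_n) (s : 'I_3) : config n :=
  [ffun k => if k == i then s else x k].

(* Transition rate of the SIR Markov chain from x to y (0 when y = x). *)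
Definition sir_rate (R : realType) n (A : 'M[R]_n) (beta delta : 'I_n -> R)
  (x y : config n) : R :=
  \sum_(i < n)
     ((if (x i == stS) && (y == upd x i stI)
       then beta i * \sum_(j < n) A i j * (if x j == stI then 1 else 0) else 0)
    + (if (x i == stI) && (y == upd x i stR) then delta i else 0)).

(* p t x = Pr(state at time t is x); Kolmogorov forward equation on t > 0,
   right-continuity at 0 and the deterministic initial condition x0. *)
Definition sir_law (R : realType) n (A : 'M[R]_n) (beta delta : 'I_n -> R)
  (x0 : config n) (p : R -> config n -> R) : Prop :=
  (forall y, p 0 y = if y == x0 then 1 else 0) /\
  (forall y, p t y @[t --> 0^'+] --> p 0 y) /\
  (forall t : R, 0 < t -> forall y,
     is_derive t 1 (fun s => p s y)
       (\sum_(x : config n) p t x * sir_rate A beta delta x y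
        - p t y * \sum_(z : config n) sir_rate A beta delta y z)).

Definition sigmaI n (x : config n) : nat := #|[set i | x i == stI]|.
Definition sigmaR n (x : config n) : nat := #|[set i | x i == stR]|.

Definition expect (R : realType) n (p : R -> config n -> R) (t : R)
  (f : config n -> R) : R := \sum_(x : config n) p t x * f x.

Definition Ivec (R : realType) n (x : config n) : 'cV[R]_n :=
  \col_i (if x i == stI then 1 else 0).
Definition Svec (R : realType) n (x : config n) : 'rV[R]_n :=
  \row_i (if x i == stS then 1 else 0).

(* Main.v *)
Require Import Defs.
From HB Require Import structures.
From mathcomp Require Import all_boot all_order all_algebra.
From mathcomp Require Import all_classical all_reals all_analysis.
From mathcomp Require Import ring lra.
Import Order.TTheory GRing.Theory Num.Theory.
Import numFieldNormedType.Exports.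
Local Open Scope classical_set_scope.
Local Open Scope ring_scope.

Lemma is_derive_bigsum (R : realType) (I : Type) (r : seq I) (h : I -> R -> R)
  (dh : I -> R) (x : R) :
  (forall i, is_derive x 1 (h i) (dh i)) ->
  is_derive x 1 (fun t => \sum_(i <- r) h i t) (\sum_(i <- r) dh i).
Proof.
move=> H; elim: r => [|a r IH].
  rewrite big_nil.
  have -> : (fun t : R => \sum_(i <- [::]) h i t) = cst 0 by apply/funext => t; rewrite big_nil.
  exact: is_derive_cst.
have -> : (fun t : R => \sum_(i <- a :: r) h i t) = h a + (fun t => \sum_(i <- r) h i t).
  by apply/funext => t; rewrite big_cons.
rewrite big_cons; exact: is_deriveD.
Qed.

Lemma cvg_bigsum (R : realType) (I : Type) (r : seq I) (h : I -> R -> R)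
  (l : I -> R) (F : set_system R) {FF : Filter F} :
  (forall i, h i t @[t --> F] --> l i) ->
  (\sum_(i <- r) h i t) @[t --> F] --> \sum_(i <- r) l i.
Proof.
move=> H; elim: r => [|a r IH].
  rewrite big_nil.
  have -> : (fun t : R => \sum_(i <- [::]) h i t) = cst 0 by apply/funext => t; rewrite big_nil.
  exact: cvg_cst.
have -> : (fun t : R => \sum_(i <- a :: r) h i t) = h a + (fun t => \sum_(i <- r) h i t).
  by apply/funext => t; rewrite big_cons.
rewrite big_cons; exact: cvgD.
Qed.

Lemma ndecr_from_derive (R : realType) (g dg : R -> R) :
  (forall t : R, 0 < t -> is_derive t 1 g (dg t)) ->
  g t @[t --> 0^'+] --> g 0 ->
  (forall t : R, 0 < t -> 0 <= dg t) ->
  forall s t : R, 0 <= s -> s <= t -> g s <= g t.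
Proof.
move=> Hd Hc Hp s t s0 st.
apply: (@ger0_derive1_ndecry R g 0) => //.
- by move=> x; rewrite in_itv /= andbT => x0; case: (Hd x x0).
- by move=> x; rewrite in_itv /= andbT => x0; have := Hd x x0 => Hx; rewrite derive1E derive_val Hp.
- apply/continuous_within_itvcyP; split => //.
  move=> x; rewrite in_itv /= andbT => x0.
  apply/differentiable_continuous/derivable1_diffP; by case: (Hd x x0).
Qed.

Lemma nincr_from_derive (R : realType) (g dg : R -> R) :
  (forall t : R, 0 < t -> is_derive t 1 g (dg t)) ->
  g t @[t --> 0^'+] --> g 0 ->
  (forall t : R, 0 < t -> dg t <= 0) ->
  forall s t : R, 0 <= s -> s <= t -> g t <= g s.
Proof.
move=> Hd Hc Hp s t s0 st.
rewrite -lerN2.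
apply: (@ndecr_from_derive R (fun t => - g t) (fun t => - dg t)) => //.
- by move=> x x0; apply: is_deriveN; apply: Hd.
- exact: cvgN.
- by move=> x x0; rewrite oppr_ge0 Hp.
Qed.

Set Implicit Arguments. Unset Strict Implicit.

Definition phi n (x : config n) : nat := (\sum_(k < n) nat_of_ord (x k))%N.

Lemma phi_upd n (x : config n) i (s : 'I_3) : (x i < s)%N -> (phi x < phi (upd x i s))%N.
Proof.
move=> lt; rewrite /phi (bigD1 i) //= [X in (_ < X)%N](bigD1 i) //= ffunE eqxx.
have -> : (\sum_(k < n | k != i) upd x i s k = \sum_(k < n | k != i) x k)%N.
  apply: eq_bigr => k /negPf kn; by rewrite ffunE kn.
by rewrite ltn_add2r.
Qed.

Lemma rate_supp (R : realType) n (A : 'M[R]_n) beta delta (x y : config n) :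
  sir_rate A beta delta x y != 0 -> (phi x < phi y)%N.
Proof.
apply: contraNT => H; rewrite /sir_rate big1 // => i _.
case: ifP => [/andP[/eqP xi /eqP yE]|_].
  by have := @phi_upd _ x i stI; rewrite xi => /(_ isT); rewrite -yE (negPf H).
case: ifP => [/andP[/eqP xi /eqP yE]|_]; last by rewrite addr0.
by have := @phi_upd _ x i stR; rewrite xi => /(_ isT); rewrite -yE (negPf H).
Qed.

Lemma is_derive_lin (R : realType) (q s : R) : is_derive s 1 (fun u : R => q * u) q.
Proof.
have H := @is_deriveZ R R^o R^o id q s 1 1 (is_derive_id s 1).
have E : (fun u : R => q * u) = q \*: (@id R) by apply/funext => u.
rewrite E; apply: is_derive_eq H _.
by rewrite /GRing.scale /= mulr1.
Qed.

Lemma p_ge0 (R : realType) n (A : 'M[R]_n) beta delta x0 (p : R -> config n -> R) :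
  (forall x y, 0 <= sir_rate A beta delta x y) -> sir_law A beta delta x0 p ->
  forall t, 0 <= t -> forall y, 0 <= p t y.
Proof.
move=> Hr [H0 [Hc Hd]] t t0 y.
suff H : forall k y, (phi y < k)%N -> forall t, 0 <= t -> 0 <= p t y.
  exact: (H (phi y).+1).
elim=> [//|k IH] {t t0}y Hy t t0.
set q := \sum_z sir_rate A beta delta y z.
pose g := fun s => expR (q * s) * p s y.
pose h := fun s => \sum_x p s x * sir_rate A beta delta x y.
have hge0 : forall s, 0 < s -> 0 <= h s.
  move=> s s0; apply: sumr_ge0 => x _.
  have [->|rn0] := eqVneq (sir_rate A beta delta x y) 0; first by rewrite mulr0.
  apply: mulr_ge0 (Hr x y); apply: IH (ltW s0).
  by apply: leq_trans (rate_supp rn0) _.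
have Hg : g 0 <= g t.
  apply: (@ndecr_from_derive R g (fun s => expR (q * s) * h s)) => //.
  - move=> s s0; have Hp := Hd s s0 y.
    have He : is_derive s 1 (expR \o (fun u => q * u)) (expR (q * s) * q).
      apply: is_derive1_comp; last exact: is_derive_lin.
    have := is_deriveM He Hp.
    have -> : (expR \o (fun u => q * u)) * (fun s => p s y) = g by apply/funext.
    move=> HH; apply: is_derive_eq HH _.
    rewrite /GRing.scale /= /h /q; ring.
  - apply: cvgM; last exact: Hc.
    apply: cvg_at_right_filter.
    apply: continuous_comp; last exact: continuous_expR.
    have := is_derive_lin q 0 => -[dd _].
    exact/differentiable_continuous/derivable1_diffP.
  - by move=> s s0; apply: mulr_ge0; [exact: expR_ge0 | exact: hge0].
have : 0 <= g t.
  apply: le_trans Hg; rewrite /g mulr0 expR0 mul1r H0; by case: ifP.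
by rewrite /g pmulr_rge0 // expR_gt0.
Qed.

Definition Qgen (R : realType) n (A : 'M[R]_n) beta delta (f : config n -> R) (x : config n) : R :=
  \sum_y sir_rate A beta delta x y * (f y - f x).

Lemma expect_derive (R : realType) n (A : 'M[R]_n) beta delta x0 (p : R -> config n -> R)
  (f : config n -> R) (t : R) :
  sir_law A beta delta x0 p -> 0 < t ->
  is_derive t 1 (fun s => expect p s f) (\sum_x p t x * Qgen A beta delta f x).
Proof.
move=> [_ [_ Hd]] t0.
apply: is_derive_eq.
  apply: (@is_derive_bigsum R _ (index_enum (config n)) (fun x s => p s x * f x)
    (fun y => (\sum_x p t x * sir_rate A beta delta x y
       - p t y * \sum_z sir_rate A beta delta y z) * f y)).
  move=> y; have H := Hd t t0 y.
  have H2 := @is_deriveZ R R^o R^o (fun s => p s y) (f y) t 1 _ H.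
  have E : (fun s => p s y * f y) = f y \*: (fun s => p s y).
    by apply/funext => s /=; rewrite /GRing.scale /= mulrC.
  rewrite E; apply: is_derive_eq H2 _; by rewrite /GRing.scale /= mulrC.
rewrite /Qgen.
under eq_bigr do rewrite mulrBl.
rewrite sumrB.
have -> : \sum_x p t x * \sum_y sir_rate A beta delta x y * (f y - f x)
  = \sum_x \sum_y p t x * sir_rate A beta delta x y * f y
    - \sum_x p t x * f x * \sum_y sir_rate A beta delta x y.
  rewrite -sumrB; apply: eq_bigr => x _.
  rewrite !mulr_sumr -sumrB; apply: eq_bigr => y _; ring.
congr (_ - _).
  rewrite exchange_big /=; apply: eq_bigr => y _.
  by rewrite mulr_suml.
by apply: eq_bigr => x _; ring.
Qed.

Lemma sum_upd (R : realType) n (w : 'I_n -> 'I_3 -> R) (x : config n) i s :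
  \sum_k w k (upd x i s k) = \sum_k w k (x k) - w i (x i) + w i s.
Proof.
rewrite (bigD1 i) //= [X in _ = X - _ + _](bigD1 i) //= ffunE eqxx.
have -> : \sum_(k < n | k != i) w k (upd x i s k) = \sum_(k < n | k != i) w k (x k).
  by apply: eq_bigr => k /negPf kn; rewrite ffunE kn.
ring.
Qed.

Lemma sum_ifeq (R : realType) n (c : bool) (a : R) (z : config n) (F : config n -> R) :
  \sum_y (if c && (y == z) then a else 0) * F y = (if c then a else 0) * F z.
Proof.
rewrite (bigD1 z) //= eqxx andbT big1 ?addr0 // => y /negPf yz.
by rewrite yz andbF mul0r.
Qed.

Definition cinf (R : realType) n (A : 'M[R]_n) (x : config n) i : R :=
  \sum_(j < n) A i j * (if x j == stI then 1 else 0).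

Lemma Q_lin (R : realType) n (A : 'M[R]_n) beta delta (w : 'I_n -> 'I_3 -> R) (x : config n) :
  Qgen A beta delta (fun y => \sum_k w k (y k)) x =
  \sum_i ((if x i == stS then beta i * cinf A x i else 0) * (w i stI - w i (x i))
        + (if x i == stI then delta i else 0) * (w i stR - w i (x i))).
Proof.
rewrite /Qgen /sir_rate.
under eq_bigr do rewrite mulr_suml.
rewrite exchange_big /=; apply: eq_bigr => i _.
under eq_bigr do rewrite mulrDl.
rewrite big_split /= !sum_ifeq !sum_upd /cinf.
congr (_ * _ + _ * _); ring.
Qed.

Lemma st_exh (s : 'I_3) : [|| s == stS, s == stI | s == stR].
Proof. by case: s => [[|[|[|m]]] Hm]. Qed.

Definition wS (R : realType) n (k : 'I_n) (s : 'I_3) : R := if s == stR then 1 else 0.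
Definition wW (R : realType) n (x0 : config n) (v : 'cV[R]_n) (k : 'I_n) (s : 'I_3) : R :=
  if s == stR then 1 else if s == stI then v k 0 else (if x0 k == stS then 0 else v k 0).

Lemma sigmaR_sum (R : realType) n (x : config n) :
  (sigmaR x)%:R = \sum_k wS R k (x k).
Proof.
rewrite /sigmaR -sum1_card natr_sum big_mkcond /=; apply: eq_bigr => k _.
by rewrite /in_mem /= /in_set /= asboolb /wS.
Qed.

Lemma QS_ge0 (R : realType) n (A : 'M[R]_n) beta delta (x : config n) :
  (forall i j, 0 <= A i j) -> (forall i, 0 <= beta i) -> (forall i, 0 <= delta i) ->
  0 <= Qgen A beta delta (fun y => \sum_k wS R k (y k)) x.
Proof.
move=> HA Hb Hd; rewrite Q_lin; apply: sumr_ge0 => i _.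
rewrite /wS /=.
have [xS|nS] := eqVneq (x i) stS.
  by rewrite xS /= subrr mulr0 mul0r addr0.
rewrite mul0r add0r; case: ifP => [/eqP ->|_]; last by rewrite mul0r.
by rewrite /= subr0 mulr1 Hd.
Qed.

Lemma cinf_ge0 (R : realType) n (A : 'M[R]_n) (x : config n) i :
  (forall i j, 0 <= A i j) -> 0 <= cinf A x i.
Proof.
move=> HA; apply: sumr_ge0 => j _; apply: mulr_ge0 => //; by case: ifP.
Qed.

Lemma QW_le0 (R : realType) n (A : 'M[R]_n) beta delta (x0 x : config n) (v : 'cV[R]_n) :
  (forall i j, 0 <= A i j) -> (forall i, 0 <= beta i) -> (forall i, 0 <= delta i) ->
  (forall i, 0 < v i 0) ->
  (forall j, \sum_i (if x0 i == stS then beta i * v i 0 else 0) * A i j + delta j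
             < v j 0 * delta j) ->
  Qgen A beta delta (fun y => \sum_k wW x0 v k (y k)) x <= 0.
Proof.
move=> HA Hb Hd Hv HM; rewrite Q_lin.
apply: (@le_trans _ _ (\sum_i ((if x0 i == stS then beta i * v i 0 * cinf A x i else 0)
     + (if x i == stI then delta i * (1 - v i 0) else 0)))).
  apply: ler_sum => i _; rewrite /wW /=.
  have [xS|nS] := eqVneq (x i) stS.
    rewrite xS /=; case: ifP => _; rewrite mul0r !addr0.
      by rewrite subr0 le_eqVlt; apply/orP; left; apply/eqP; ring.
    by rewrite subrr mulr0.
  rewrite mul0r add0r.
  have [xI|nI] := eqVneq (x i) stI.
    rewrite xI /= lerDr; case: ifP => _ //.
    by apply: mulr_ge0; [apply: mulr_ge0 => //; exact: ltW | exact: cinf_ge0].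
  rewrite mul0r addr0; case: ifP => _ //.
  by apply: mulr_ge0; [apply: mulr_ge0 => //; exact: ltW | exact: cinf_ge0].
rewrite big_split /=.
have -> : \sum_i (if x0 i == stS then beta i * v i 0 * cinf A x i else 0)
   = \sum_j (\sum_i (if x0 i == stS then beta i * v i 0 else 0) * A i j)
          * (if x j == stI then 1 else 0).
  transitivity (\sum_i \sum_j (if x0 i == stS then beta i * v i 0 else 0)
       * (A i j * (if x j == stI then 1 else 0))).
    apply: eq_bigr => i _; rewrite /cinf; case: ifP => _.
      by rewrite mulr_sumr; apply: eq_bigr => j _; rewrite mulrA.
    by rewrite big1 // => j _; rewrite mul0r.
  rewrite exchange_big /=; apply: eq_bigr => j _; rewrite mulr_suml.
  by apply: eq_bigr => i _; rewrite mulrA.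
rewrite -big_split /=; apply: sumr_le0 => j _.
case: ifP => _; last by rewrite mulr0 addr0.
have := HM j; lra.
Qed.

Lemma S_le_W (R : realType) n (x0 x : config n) (v : 'cV[R]_n) :
  (forall i, 0 < v i 0) ->
  \sum_k wS R k (x k) <= \sum_k wW x0 v k (x k).
Proof.
move=> Hv; apply: ler_sum => k _; rewrite /wS /wW.
case: ifP => _ //; case: ifP => _; first exact: ltW.
case: ifP => _ //; exact: ltW.
Qed.

Lemma W_x0 (R : realType) n (x0 : config n) (v : 'cV[R]_n) :
  (forall i, x0 i != stR) ->
  \sum_k wW x0 v k (x0 k) = (v^T *m Ivec R x0) 0 0.
Proof.
move=> H; rewrite !mxE; apply: eq_bigr => k _; rewrite !mxE /wW (negPf (H k)).
case: ifP => [_|nI]; first by rewrite mulr1.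
have -> : x0 k == stS by move: (st_exh (x0 k)); rewrite nI (negPf (H k)) !orbF.
by rewrite mulr0.
Qed.

Unset Implicit Arguments. Set Strict Implicit.

Lemma expect_rc (R : realType) n (A : 'M[R]_n) beta delta x0 (p : R -> config n -> R)
  (f : config n -> R) :
  sir_law A beta delta x0 p ->
  expect p t f @[t --> 0^'+] --> expect p 0 f.
Proof.
move=> [_ [Hc _]]; rewrite /expect.
apply: (@cvg_bigsum R _ _ (fun x s => p s x * f x)) => x.
by apply: cvgM; [exact: Hc | exact: cvg_cst].
Qed.

Lemma expect_ndecr (R : realType) n (A : 'M[R]_n) beta delta x0 (p : R -> config n -> R)
  (f : config n -> R) :
  sir_law A beta delta x0 p -> (forall t, 0 <= t -> forall y, 0 <= p t y) ->
  (forall x, 0 <= Qgen A beta delta f x) ->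
  forall s t : R, 0 <= s -> s <= t -> expect p s f <= expect p t f.
Proof.
move=> Hl Hp HQ.
apply: (@ndecr_from_derive R (fun s => expect p s f) (fun t => \sum_x p t x * Qgen A beta delta f x)).
- by move=> t t0; exact: (expect_derive f Hl t0).
- exact: expect_rc Hl.
- move=> t t0; apply: sumr_ge0 => x _; apply: mulr_ge0 => //; apply: Hp; exact: ltW.
Qed.

Lemma expect_nincr (R : realType) n (A : 'M[R]_n) beta delta x0 (p : R -> config n -> R)
  (f : config n -> R) :
  sir_law A beta delta x0 p -> (forall t, 0 <= t -> forall y, 0 <= p t y) ->
  (forall x, Qgen A beta delta f x <= 0) ->
  forall s t : R, 0 <= s -> s <= t -> expect p t f <= expect p s f.
Proof.
move=> Hl Hp HQ.
apply: (@nincr_from_derive R (fun s => expect p s f) (fun t => \sum_x p t x * Qgen A beta delta f x)).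
- by move=> t t0; exact: (expect_derive f Hl t0).
- exact: expect_rc Hl.
- move=> t t0; apply: sumr_le0 => x _; apply: mulr_ge0_le0 => //; apply: Hp; exact: ltW.
Qed.

Arguments expect_rc {R n A beta delta x0 p} f.
Arguments expect_ndecr {R n A beta delta x0 p f}.
Arguments expect_nincr {R n A beta delta x0 p f}.

Theorem proposition1 (R : realType) (n : nat) (A : 'M[R]_n)
  (beta delta : 'I_n -> R) (x0 : config n) (p : R -> config n -> R)
  (lambdabar : R) (v : 'cV[R]_n) :
  (forall i j, A i j = 0 \/ A i j = 1) ->
  (forall i j, A i j = A j i) ->
  (forall i, 0 < beta i) -> (forall i, 0 < delta i) ->
  (forall i, x0 i != stR) ->
  sir_law A beta delta x0 p ->
  0 < lambdabar ->
  (forall i, 0 < v i 0) ->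
  (forall k, ((v^T *m diag_mx (Svec R x0) *m diag_mx (\row_i beta i) *m A)
              + (const_mx 1 *m diag_mx (\row_i delta i))) 0 k
             < (v^T *m diag_mx (\row_i delta i)) 0 k) ->
  (v^T *m Ivec R x0) 0 0 < lambdabar + (sigmaI x0)%:R ->
  exists l : R,
    (expect p t (fun x => (sigmaR x)%:R)) @[t --> +oo] --> l /\
    l - (sigmaI x0)%:R < lambdabar.
Proof.
move=> HA01 _ Hb Hd Hx0 Hl Hlam Hv Hmat HI.
have HA : forall i j, 0 <= A i j by move=> i j; case: (HA01 i j) => ->.
have Hb0 : forall i, 0 <= beta i by move=> i; exact: ltW.
have Hd0 : forall i, 0 <= delta i by move=> i; exact: ltW.
have Hr : forall x y, 0 <= sir_rate A beta delta x y.
  move=> x y; apply: sumr_ge0 => i _; apply: addr_ge0; case: ifP => _ //.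
  apply: mulr_ge0 => //; apply: sumr_ge0 => j _; apply: mulr_ge0 => //; by case: ifP.
have Hp := p_ge0 Hr Hl.
have HM : forall j, \sum_i (if x0 i == stS then beta i * v i 0 else 0) * A i j + delta j
             < v j 0 * delta j.
  move=> j; have := Hmat j; rewrite !mul_mx_diag !mxE.
  rewrite mul1r => H; apply: le_lt_trans H; rewrite lerD2r le_eqVlt; apply/orP; left.
  apply/eqP; apply: eq_bigr => i _; rewrite !mxE; case: ifP => _; ring.
set W0 := (v^T *m Ivec R x0) 0 0.
set fS := fun x : config n => (sigmaR x)%:R : R.
set fW := fun y : config n => \sum_k wW x0 v k (y k).
have fSE : fS = (fun y => \sum_k wS R k (y k)) by apply/funext => y; rewrite /fS sigmaR_sum.
have Hbound : forall t : R, 0 <= t -> expect p t fS <= W0.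
  move=> t t0.
  have -> : W0 = expect p 0 fW.
    rewrite /expect (bigD1 x0) //= big1 ?addr0.
      by case: Hl => [H0 _]; rewrite H0 eqxx mul1r /fW W_x0.
    by move=> y /negPf yx; case: Hl => [H0 _]; rewrite H0 yx mul0r.
  apply: (@le_trans _ _ (expect p t fW)).
    rewrite fSE /expect; apply: ler_sum => y _; apply: ler_wpM2l; first exact: Hp.
    exact: S_le_W.
  have HQ : forall x, Qgen A beta delta fW x <= 0 by move=> x; apply: QW_le0.
  by have := expect_nincr Hl Hp HQ; apply => //.
have Hmono : forall s t : R, 0 <= s -> s <= t -> expect p s fS <= expect p t fS.
  apply: (expect_ndecr Hl Hp) => x; rewrite fSE; exact: QS_ge0.
pose g := fun t : R => expect p (Num.max t 0) fS.
have gnd : nondecreasing_fun g.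
  move=> s t st; apply: Hmono; first by rewrite le_max lexx orbT.
  by apply: le_max2.
have gub : has_ubound (range g).
  by exists W0 => _ [t _ <-]; apply: Hbound; rewrite le_max lexx orbT.
have gc := nondecreasing_cvgr gnd gub.
exists (sup (range g)); split.
  apply: cvg_trans gc; apply: near_eq_cvg.
  near=> t; rewrite /g max_l //; near: t; exact: nbhs_pinfty_ge.
have : sup (range g) <= W0.
  apply: ge_sup; first by exists (g 0), 0.
  by move=> _ [t _ <-]; apply: Hbound; rewrite le_max lexx orbT.
move: HI; rewrite -/W0; lra.
Unshelve. all: end_near.
Qed.
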